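(* Let $Q=(q_n)$ be a basic sequence and let $x=E_0.E_1E_2\cdots$ (w.r.t. $Q$) be $Q$-distribution normal. If $y=F_0.F_1F_2\cdots$ (w.r.t. $Q$) satisfies $$\lim_{N\to\infty}\frac1N\sum_{n=1}^N\frac{|E_n-F_n|+1}{q_n}=0,$$ then $y$ is $Q$-distribution normal.
   Context: A basic sequence is a sequence $Q=(q_n)_{n\ge1}$ of integers with $q_n\ge2$. The $Q$-Cantor series expansion of a real $x$ is the unique expansion $x=E_0+\sum_{n\ge1}\frac{E_n}{q_1\cdots q_n}$ with $E_0=\lfloor x\rfloor$, $E_n\in\{0,\dots,q_n-1\}$ and $E_n\ne q_n-1$ infinitely often; written $x=E_0.E_1E_2\cdots$ w.r.t. $Q$. Let $T_{Q,n}(x)=\left(\prod_{j=1}^n q_j\right)x \bmod 1$ (with $T_{Q,0}(x)=x\bmod1$). A real $x$ is $Q$-distribution normal if the sequence $(T_{Q,n}(x))_{n\ge0}$ is uniformly distributed modulo $1$. *)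

(* Defs.v *)
From Stdlib Require Import Reals Lra Lia.
Open Scope R_scope.

(* A basic sequence Q = (q_n)_{n>=1}, represented as q : nat -> nat,
   only the values at n >= 1 matter. *)
Definition basic_seq (q : nat -> nat) : Prop := forall n, (1 <= n)%nat -> (2 <= q n)%nat.

Fixpoint qprod (q : nat -> nat) (n : nat) : R :=
  match n with
  | O => 1
  | S m => qprod q m * INR (q (S m))
  end.

Definition frac (x : R) : R := x - IZR (Int_part x).
Definition floorR (x : R) : Z := Int_part x.

Definition cantor_expansion (q : nat -> nat) (x : R) (E : nat -> Z) : Prop :=
  E 0%nat = floorR x /\
  (forall n, (1 <= n)%nat -> (0 <= E n)%Z /\ (E n < Z.of_nat (q n))%Z) /\
  (forall m, exists n, (m <= n)%nat /\ (1 <= n)%nat /\ E n <> (Z.of_nat (q n) - 1)%Z) /\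
  Un_cv (fun N => IZR (E 0%nat) + sum_f 1 N (fun n => IZR (E n) / qprod q n)) x.

Definition TQ (q : nat -> nat) (n : nat) (x : R) : R := frac (qprod q n * x).

Fixpoint count_in (u : nat -> R) (a b : R) (N : nat) : nat :=
  match N with
  | O => O
  | S m => (count_in u a b m +
            (if Rle_dec a (u m) then if Rlt_dec (u m) b then 1 else 0 else 0))%nat
  end.

Definition u_d_mod1 (u : nat -> R) : Prop :=
  forall a b, 0 <= a -> a < b -> b <= 1 ->
    Un_cv (fun N => INR (count_in (fun n => frac (u n)) a b N) / INR N) (b - a).

Definition Q_distribution_normal (q : nat -> nat) (x : R) : Prop :=
  u_d_mod1 (fun n => TQ q n x).

(* Main.v *)
Require Import Defs.
From Stdlib Require Import Reals Lra Lia.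
Open Scope R_scope.

Fixpoint Psum (f : nat -> R) (n : nat) : R :=
  match n with O => 0 | S m => Psum f m + f (S m) end.

Lemma sum_f_Psum (f : nat -> R) (N : nat) : (1 <= N)%nat -> sum_f 1 N f = Psum f N.
Proof.
  intros H. destruct N as [|m]; [lia|]. unfold sum_f.
  replace (S m - 1)%nat with m by lia.
  clear H. induction m as [|m IH].
  - simpl. ring.
  - simpl sum_f_R0. rewrite IH.
    simpl. replace (m + 1)%nat with (S m) by lia. ring.
Qed.

Fixpoint Ssum (q : nat -> nat) (E : nat -> Z) (n : nat) : R :=
  match n with O => IZR (E 0%nat) | S m => Ssum q E m + IZR (E (S m)) / qprod q (S m) end.

Fixpoint Iint (q : nat -> nat) (E : nat -> Z) (n : nat) : Z :=
  match n with O => E 0%nat | S m => (Z.of_nat (q (S m)) * Iint q E m + E (S m))%Z end.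

Lemma qprod_pos q : basic_seq q -> forall n, 0 < qprod q n.
Proof.
  intros Hq n; induction n; simpl; [lra|].
  assert (H2 := Hq (S n) ltac:(lia)). apply le_INR in H2. simpl in H2.
  apply Rmult_lt_0_compat; lra.
Qed.

Lemma Ssum_eq q E N : (1 <= N)%nat ->
  IZR (E 0%nat) + sum_f 1 N (fun n => IZR (E n) / qprod q n) = Ssum q E N.
Proof.
  intros H. rewrite sum_f_Psum by exact H. clear H.
  induction N; simpl; [lra|]. rewrite <- IHN. lra.
Qed.

Lemma Iint_eq q E : basic_seq q -> forall n, qprod q n * Ssum q E n = IZR (Iint q E n).
Proof.
  intros Hq n. induction n; simpl Ssum; simpl Iint.
  - simpl. lra.
  - rewrite plus_IZR, mult_IZR, <- INR_IZR_INZ, <- IHn.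
    assert (P := qprod_pos q Hq (S n)).
    rewrite Rmult_plus_distr_l. simpl qprod at 1.
    simpl qprod. simpl qprod in P. field. assert (H2 := Hq (S n) ltac:(lia)). apply le_INR in H2. simpl in H2. assert (0 < qprod q n) by (apply qprod_pos; exact Hq). split; lra.
Qed.

Lemma frac_eq z r : 0 <= r < 1 -> frac (IZR z + r) = r.
Proof.
  intros Hr. unfold frac, Int_part.
  rewrite <- (tech_up (IZR z + r) (z + 1)); rewrite ?plus_IZR; try lra.
  replace (z + 1 - 1)%Z with z by lia. lra.
Qed.

Lemma digit_le q E x n : cantor_expansion q x E -> (1 <= n)%nat -> IZR (E n) <= INR (q n) - 1.
Proof.
  intros [_ [Hd _]] Hn. destruct (Hd n Hn) as [_ H].
  rewrite INR_IZR_INZ. assert (E n <= Z.of_nat (q n) - 1)%Z by lia.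
  apply IZR_le in H0. rewrite minus_IZR in H0. exact H0.
Qed.

Lemma digit_ge q E x n : cantor_expansion q x E -> (1 <= n)%nat -> 0 <= IZR (E n).
Proof.
  intros [_ [Hd _]] Hn. destruct (Hd n Hn) as [H _]. apply IZR_le in H. exact H.
Qed.

Lemma tele q E x : basic_seq q -> cantor_expansion q x E -> forall n j,
  0 <= Ssum q E (n + j) - Ssum q E n <= 1 / qprod q n - 1 / qprod q (n + j).
Proof.
  intros Hq Hx n j. induction j.
  - rewrite Nat.add_0_r. lra.
  - rewrite Nat.add_succ_r. simpl Ssum.
    assert (P := qprod_pos q Hq (n + j)).
    assert (H2 := Hq (S (n + j)) ltac:(lia)). apply le_INR in H2. simpl in H2.
    assert (Hle := digit_le q E x (S (n+j)) Hx ltac:(lia)).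
    assert (Hge := digit_ge q E x (S (n+j)) Hx ltac:(lia)).
    simpl qprod.
    set (Q := qprod q (n + j)) in *. set (qq := INR (q (S (n + j)))) in *.
    set (e := IZR (E (S (n + j)))) in *.
    assert (e / (Q * qq) <= 1 / Q - 1 / (Q * qq)).
    { replace (1 / Q - 1 / (Q * qq)) with ((qq - 1) / (Q * qq)) by (field; lra).
      unfold Rdiv. apply Rmult_le_compat_r; [|lra].
      left. apply Rinv_0_lt_compat. apply Rmult_lt_0_compat; lra. }
    assert (0 <= e / (Q * qq)).
    { unfold Rdiv. apply Rmult_le_pos; [lra|]. left. apply Rinv_0_lt_compat.
      apply Rmult_lt_0_compat; lra. }
    lra.
Qed.

Definition Rn q E x n := qprod q n * (x - Ssum q E n).

Lemma cvg_S q E x : cantor_expansion q x E -> forall eps, eps > 0 ->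
  exists N0, forall N, (N >= N0)%nat -> Rabs (Ssum q E N - x) < eps.
Proof.
  intros [_ [_ [_ Hc]]] eps He. destruct (Hc eps He) as [N0 HN0].
  exists (S N0). intros N HN. rewrite <- Ssum_eq by lia. apply HN0. lia.
Qed.

Lemma lim_le q E x c K : cantor_expansion q x E ->
  (forall N, (N >= K)%nat -> Ssum q E N <= c) -> x <= c.
Proof.
  intros Hx H. destruct (Rle_dec x c) as [|Hn]; [auto|]. exfalso.
  destruct (cvg_S q E x Hx (x - c) ltac:(lra)) as [N0 HN0].
  specialize (HN0 (max N0 K) ltac:(lia)). specialize (H (max N0 K) ltac:(lia)).
  apply Rabs_def2 in HN0. lra.
Qed.

Lemma lim_ge q E x c K : cantor_expansion q x E ->
  (forall N, (N >= K)%nat -> c <= Ssum q E N) -> c <= x.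
Proof.
  intros Hx H. destruct (Rle_dec c x) as [|Hn]; [auto|]. exfalso.
  destruct (cvg_S q E x Hx (c - x) ltac:(lra)) as [N0 HN0].
  specialize (HN0 (max N0 K) ltac:(lia)). specialize (H (max N0 K) ltac:(lia)).
  apply Rabs_def2 in HN0. lra.
Qed.

Lemma Rn_bounds q E x : basic_seq q -> cantor_expansion q x E -> forall n, 0 <= Rn q E x n < 1.
Proof.
  intros Hq Hx n. unfold Rn. assert (Pn := qprod_pos q Hq n). split.
  - apply Rmult_le_pos; [lra|].
    assert (Ssum q E n <= x); [|lra].
    apply (lim_ge q E x _ n Hx). intros N HN.
    destruct (tele q E x Hq Hx n (N - n)) as [H _]. replace (n + (N - n))%nat with N in H by lia. lra.
  - destruct Hx as (H0 & Hd & Hinf & Hc).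
    assert (Hx : cantor_expansion q x E) by exact (conj H0 (conj Hd (conj Hinf Hc))).
    destruct (Hinf (S n)) as [m [Hm1 [Hm2 Hm3]]].
    destruct m as [|k]; [lia|].
    assert (Ek : IZR (E (S k)) <= INR (q (S k)) - 2).
    { destruct (Hd (S k) Hm2) as [_ Hl]. rewrite INR_IZR_INZ.
      assert (E (S k) <= Z.of_nat (q (S k)) - 2)%Z by lia.
      apply IZR_le in H. rewrite minus_IZR in H. exact H. }
    assert (Pk := qprod_pos q Hq k).
    assert (H2 := Hq (S k) ltac:(lia)). apply le_INR in H2. simpl in H2.
    assert (Hb : x <= Ssum q E n + 1 / qprod q n - 1 / qprod q (S k)).
    { apply (lim_le q E x _ (S k) Hx). intros N HN.
      destruct (tele q E x Hq Hx (S k) (N - S k)) as [_ H1].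
      replace (S k + (N - S k))%nat with N in H1 by lia.
      destruct (tele q E x Hq Hx n (k - n)) as [_ H3].
      replace (n + (k - n))%nat with k in H3 by lia.
      assert (0 < qprod q N) by (apply qprod_pos; auto).
      assert (0 < 1 / qprod q N) by (apply Rdiv_lt_0_compat; lra).
      simpl Ssum in H1 |- *. simpl qprod in H1 |- *.
      assert (IZR (E (S k)) / (qprod q k * INR (q (S k))) <=
              1 / qprod q k - 2 / (qprod q k * INR (q (S k)))).
      { replace (1 / qprod q k - 2 / (qprod q k * INR (q (S k)))) with
          ((INR (q (S k)) - 2) / (qprod q k * INR (q (S k)))) by (field; lra).
        unfold Rdiv. apply Rmult_le_compat_r; [|lra].
        left. apply Rinv_0_lt_compat. apply Rmult_lt_0_compat; lra. }
      replace (2 / (qprod q k * INR (q (S k)))) with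
        (1 / (qprod q k * INR (q (S k))) + 1 / (qprod q k * INR (q (S k)))) in H by (field; lra).
      lra. }
    assert (0 < 1 / qprod q (S k)) by (apply Rdiv_lt_0_compat; [lra | apply qprod_pos; auto]).
    assert (x - Ssum q E n < 1 / qprod q n) by lra.
    apply Rmult_lt_compat_l with (r := qprod q n) in H1; [|lra].
    replace (qprod q n * (1 / qprod q n)) with 1 in H1 by (field; lra). exact H1.
Qed.

Lemma TQ_Rn q E x : basic_seq q -> cantor_expansion q x E -> forall n,
  frac (TQ q n x) = Rn q E x n.
Proof.
  intros Hq Hx n. assert (B := Rn_bounds q E x Hq Hx n).
  assert (TQ q n x = Rn q E x n).
  { unfold TQ. replace (qprod q n * x) with (IZR (Iint q E n) + Rn q E x n).
    - apply frac_eq; auto.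
    - rewrite <- Iint_eq by auto. unfold Rn. ring. }
  rewrite H. replace (Rn q E x n) with (IZR 0 + Rn q E x n) at 1 by (simpl; ring).
  apply frac_eq; auto.
Qed.

Lemma Rn_rec q E x : basic_seq q -> forall n,
  Rn q E x n = (IZR (E (S n)) + Rn q E x (S n)) / INR (q (S n)).
Proof.
  intros Hq n. unfold Rn. simpl qprod. simpl Ssum. simpl qprod.
  assert (Pk := qprod_pos q Hq n).
  assert (H2 := Hq (S n) ltac:(lia)). apply le_INR in H2. simpl in H2.
  field. lra.
Qed.

Lemma diff_bound q E F x y : basic_seq q -> cantor_expansion q x E -> cantor_expansion q y F ->
  forall n, Rabs (Rn q E x n - Rn q F y n) <=
    (IZR (Z.abs (E (S n) - F (S n))) + 1) / INR (q (S n)).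
Proof.
  intros Hq Hx Hy n. rewrite (Rn_rec q E x Hq n), (Rn_rec q F y Hq n).
  assert (H2 := Hq (S n) ltac:(lia)). apply le_INR in H2. simpl in H2.
  set (qq := INR (q (S n))) in *.
  replace ((IZR (E (S n)) + Rn q E x (S n)) / qq - (IZR (F (S n)) + Rn q F y (S n)) / qq)
    with (((IZR (E (S n)) - IZR (F (S n))) + (Rn q E x (S n) - Rn q F y (S n))) * / qq) by (field; lra).
  rewrite Rabs_mult, (Rabs_pos_eq (/ qq)) by (left; apply Rinv_0_lt_compat; lra).
  unfold Rdiv. apply Rmult_le_compat_r; [left; apply Rinv_0_lt_compat; lra|].
  rewrite abs_IZR, minus_IZR.
  eapply Rle_trans; [apply Rabs_triang|].
  apply Rplus_le_compat_l.
  assert (A := Rn_bounds q E x Hq Hx (S n)). assert (B := Rn_bounds q F y Hq Hy (S n)).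
  left. apply Rabs_def1; lra.
Qed.

Lemma div_nonneg a b : 0 <= a -> 0 < b -> 0 <= a / b.
Proof. intros; unfold Rdiv; apply Rmult_le_pos; [|left; apply Rinv_0_lt_compat]; auto. Qed.

Lemma count_ext u v a b N : (forall n, u n = v n) -> count_in u a b N = count_in v a b N.
Proof. intros H; induction N; simpl; auto. rewrite IHN, H. reflexivity. Qed.

Lemma count_cmp (ux uy c : nat -> R) a b a' b' eps N : eps > 0 ->
  (forall n, Rabs (ux n - uy n) <= c (S n)) ->
  (forall n, a <= uy n < b -> Rabs (ux n - uy n) <= eps -> a' <= ux n < b') ->
  INR (count_in uy a b N) <= INR (count_in ux a' b' N) + Psum c N / eps.
Proof.
  intros He Hc Himp. induction N; simpl count_in; simpl Psum.
  - simpl. unfold Rdiv. lra.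
  - rewrite !plus_INR.
    assert (Hc0 : 0 <= c (S N)) by (eapply Rle_trans; [apply Rabs_pos| apply Hc]).
    assert (0 <= c (S N) / eps) by (apply div_nonneg; lra).
    replace ((Psum c N + c (S N)) / eps) with (Psum c N / eps + c (S N) / eps) by (field; lra).
    destruct (Rle_dec a (uy N)); destruct (Rlt_dec (uy N) b);
    destruct (Rle_dec a' (ux N)); destruct (Rlt_dec (ux N) b'); simpl; try lra;
    (assert (Hgt : Rabs (ux N - uy N) > eps) by
      (destruct (Rle_dec (Rabs (ux N - uy N)) eps) as [Hl|Hl]; [exfalso; destruct (Himp N (conj r r0) Hl); lra | lra]);
     assert (1 < c (S N) / eps) by
       (apply (Rmult_lt_reg_r eps); [lra|]; unfold Rdiv; rewrite Rmult_assoc, Rinv_l, Rmult_1_r by lra;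
        specialize (Hc N); lra);
     lra).
Qed.

Lemma ud_transfer (ux uy c : nat -> R) :
  (forall n, 0 <= ux n < 1) -> (forall n, 0 <= uy n < 1) ->
  (forall n, Rabs (ux n - uy n) <= c (S n)) ->
  (forall e, e > 0 -> exists N0, forall N, (N >= N0)%nat -> Psum c N / INR N < e) ->
  u_d_mod1 ux -> u_d_mod1 uy.
Proof.
  intros Bx By Hc Hs Hud a b Ha Hab Hb e He.
  assert (Fx : forall a b N, count_in (fun n => frac (ux n)) a b N = count_in ux a b N).
  { intros; apply count_ext; intro n. replace (ux n) with (IZR 0 + ux n) at 1 by (simpl; ring).
    apply frac_eq; auto. }
  assert (Fy : forall N, count_in (fun n => frac (uy n)) a b N = count_in uy a b N).
  { intros; apply count_ext; intro n. replace (uy n) with (IZR 0 + uy n) at 1 by (simpl; ring).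
    apply frac_eq; auto. }
  set (d := e / 4).
  assert (Hd : d > 0) by (unfold d; lra).
  set (a' := Rmax 0 (a - d)). set (b' := Rmin 1 (b + d)).
  assert (Hab' : 0 <= a' /\ a' < b' /\ b' <= 1 /\ b' - a' <= b - a + 2 * d).
  { unfold a', b', Rmax, Rmin. destruct (Rle_dec 0 (a - d)); destruct (Rle_dec 1 (b + d)); lra. }
  destruct Hab' as (H1 & H2 & H3 & H4).
  destruct (Hud a' b' H1 H2 H3 (e / 4) ltac:(lra)) as [N1 HN1].
  destruct (Hs (d * (e / 4))) as [N3 HN3]; [apply Rmult_lt_0_compat; lra|].
  assert (Low : exists N2, forall N, (N >= N2)%nat -> (N >= 1)%nat ->
             b - a - e < INR (count_in uy a b N) / INR N).
  { destruct (Rlt_dec (a + 2 * d) b) as [Hl|Hl].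
    - destruct (Hud (a + d) (b - d) ltac:(lra) ltac:(lra) ltac:(lra) (e / 4) ltac:(lra)) as [N2 HN2].
      exists (max N2 N3). intros N HN HN1'.
      specialize (HN2 N ltac:(lia)). specialize (HN3 N ltac:(lia)).
      unfold R_dist in HN2. rewrite Fx in HN2. apply Rabs_def2 in HN2.
      assert (HNp : 0 < INR N) by (apply lt_0_INR; lia).
      assert (Hc' : forall n, Rabs (uy n - ux n) <= c (S n)) by (intro n; rewrite Rabs_minus_sym; auto).
      assert (K := count_cmp uy ux c (a + d) (b - d) a b d N Hd Hc').
      assert (K' : INR (count_in ux (a + d) (b - d) N) <= INR (count_in uy a b N) + Psum c N / d).
      { apply K. intros n [Hn1 Hn2] Hn3. rewrite Rabs_minus_sym in Hn3.
        unfold Rabs in Hn3; destruct (Rcase_abs (ux n - uy n)); lra. }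
      assert (INR (count_in ux (a + d) (b - d) N) / INR N <=
              INR (count_in uy a b N) / INR N + (Psum c N / INR N) / d).
      { replace (INR (count_in uy a b N) / INR N + Psum c N / INR N / d) with
          ((INR (count_in uy a b N) + Psum c N / d) / INR N) by (field; lra).
        unfold Rdiv at 1 3. apply Rmult_le_compat_r; [left; apply Rinv_0_lt_compat; lra | exact K']. }
      assert (Psum c N / INR N / d < e / 4).
      { apply (Rmult_lt_reg_r d); [lra|]. unfold Rdiv at 1.
        rewrite Rmult_assoc, Rinv_l, Rmult_1_r by lra. lra. }
      unfold d in *. lra.
    - exists 0%nat. intros N _ HN.
      assert (0 <= INR (count_in uy a b N) / INR N).
      { apply div_nonneg; [apply pos_INR | apply lt_0_INR; lia]. }
      unfold d in Hl. lra. }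
  destruct Low as [N2 HN2].
  exists (max 1 (max N1 (max N2 N3))). intros N HN.
  specialize (HN1 N ltac:(lia)). specialize (HN3 N ltac:(lia)). specialize (HN2 N ltac:(lia) ltac:(lia)).
  unfold R_dist in *. rewrite Fx in HN1. rewrite Fy. apply Rabs_def2 in HN1.
  assert (HNp : 0 < INR N) by (apply lt_0_INR; lia).
  assert (K' : INR (count_in uy a b N) <= INR (count_in ux a' b' N) + Psum c N / d).
  { apply (count_cmp ux uy c a b a' b' d N Hd Hc). intros n [Hn1 Hn2] Hn3.
    specialize (Bx n).
    unfold a', b', Rmax, Rmin. unfold Rabs in Hn3; destruct (Rcase_abs (ux n - uy n));
    destruct (Rle_dec 0 (a - d)); destruct (Rle_dec 1 (b + d)); lra. }
  assert (INR (count_in uy a b N) / INR N <=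
          INR (count_in ux a' b' N) / INR N + (Psum c N / INR N) / d).
  { replace (INR (count_in ux a' b' N) / INR N + Psum c N / INR N / d) with
      ((INR (count_in ux a' b' N) + Psum c N / d) / INR N) by (field; lra).
    unfold Rdiv at 1 3. apply Rmult_le_compat_r; [left; apply Rinv_0_lt_compat; lra | exact K']. }
  assert (Psum c N / INR N / d < e / 4).
  { apply (Rmult_lt_reg_r d); [lra|]. unfold Rdiv at 1.
    rewrite Rmult_assoc, Rinv_l, Rmult_1_r by lra. lra. }
  apply Rabs_def1; unfold d in *; lra.
Qed.

Lemma ud_ext u v : (forall n, frac (u n) = frac (v n)) -> u_d_mod1 u -> u_d_mod1 v.
Proof.
  intros H Hu a b Ha Hab Hb. eapply Un_cv_ext; [|apply (Hu a b Ha Hab Hb)].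
  intro N; simpl. rewrite (count_ext (fun n => frac (u n)) (fun n => frac (v n))); auto.
Qed.

Theorem theorem3p2 (q : nat -> nat) (x y : R) (E F : nat -> Z) :
  basic_seq q ->
  cantor_expansion q x E ->
  cantor_expansion q y F ->
  Q_distribution_normal q x ->
  Un_cv (fun N => sum_f 1 N (fun n => (IZR (Z.abs (E n - F n)) + 1) / INR (q n)) / INR N) 0 ->
  Q_distribution_normal q y.
Proof.
  intros Hq Hx Hy Hn Hc. unfold Q_distribution_normal in *.
  assert (Rx : forall n, frac (Rn q E x n) = Rn q E x n).
  { intro n. replace (Rn q E x n) with (IZR 0 + Rn q E x n) at 1 by (simpl; ring).
    apply frac_eq. apply Rn_bounds; auto. }
  assert (Ry : forall n, frac (Rn q F y n) = Rn q F y n).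
  { intro n. replace (Rn q F y n) with (IZR 0 + Rn q F y n) at 1 by (simpl; ring).
    apply frac_eq. apply Rn_bounds; auto. }
  apply (ud_ext (Rn q F y)).
  { intro n. rewrite Ry, TQ_Rn with (E := F); auto. }
  apply (ud_transfer (Rn q E x) (Rn q F y) (fun n => (IZR (Z.abs (E n - F n)) + 1) / INR (q n))).
  - apply Rn_bounds; auto.
  - apply Rn_bounds; auto.
  - apply diff_bound; auto.
  - intros e He. destruct (Hc e He) as [N0 HN0]. exists (max N0 1). intros N HN.
    specialize (HN0 N ltac:(lia)). unfold R_dist in HN0. rewrite Rminus_0_r in HN0.
    rewrite sum_f_Psum in HN0 by lia. apply Rabs_def2 in HN0. lra.
  - apply (ud_ext (fun n => TQ q n x)); auto.
    intro n. rewrite Rx, TQ_Rn with (E := E); auto.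
Qed.
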